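(* Let $\tau\in[0,1]$, $K\ge 1$ an integer, and $g_\tau(y)=\ln\big(1+y(e^{\tau}-1)\big)$. Let $\ell_\tau$ be the largest integer $\ell\ge 0$ with $1-e^{-\ell}\le\tau$ (with $\ell_1=\infty$), and let $\ell=\min(\ell_\tau,K)$. Define the multiset $$\mathcal S(\tau)=\{e^{-(k-1)}-e^{-k}: k=1,\dots,\ell\}\cup\{\tau-(1-e^{-\ell})\}.$$ Then for every finite index set $N$ and every vector $(y_j)_{j\in N}$ with $y_j\ge 0$, $\sum_{j\in N}y_j=\tau$, and $\sum_{j\in S}y_j\le 1-e^{-|S|}$ for all $S\subseteq N$ with $|S|\le K$, one has $$\sum_{j\in N}g_\tau(y_j)\ge\sum_{y\in\mathcal S(\tau)}g_\tau(y),$$ and $\mathcal S(\tau)$ (padded with zeros) is itself feasible, so it attains the minimum.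
   Context: The function $g_\tau$ is increasing and concave on $[0,1]$ with $g_\tau(0)=0$. This program arises with $y_j=x_{ij}$ for a fixed offline agent $i$, where the constraints come from $x_i=\tau$ and the benchmark LP constraint $\sum_{j\in S}x_{ij}\le 1-e^{-|S|}$ for $|S|\le K$. *)

(* Defs.v *)
From mathcomp Require Import all_boot all_order all_algebra.
From mathcomp Require Import all_classical all_reals.
From mathcomp Require Import sequences exp.
Set Implicit Arguments. Unset Strict Implicit. Unset Printing Implicit Defensive.
Import Order.TTheory GRing.Theory Num.Theory.
Local Open Scope ring_scope.

Definition g_tau {R : realType} (tau y : R) : R := ln (1 + y * (expR tau - 1)).

(* Since l |-> 1 - e^{-l} is increasing, the set of such l
   is downward closed, so min(ell_tau, K) is the largest l <= K with
   1 - e^{-l} <= tau (l = 0 always qualifies when tau >= 0). *)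
Definition ell {R : realType} (tau : R) (K : nat) : nat :=
  (\max_(i < K.+1 | (1 - expR (- (i%:R)) <= tau)%R) (i : nat))%N.

(* The multiset S(tau), indexed by k = 0 .. ell:
   entry k (k < ell) is e^{-k} - e^{-(k+1)}  (the paper's e^{-(k-1)} - e^{-k}, k=1..ell),
   entry ell is tau - (1 - e^{-ell}). *)
Definition Sstar {R : realType} (tau : R) (K : nat) (k : nat) : R :=
  if (k < ell tau K)%N then expR (- (k%:R)) - expR (- (k.+1%:R))
  else tau - (1 - expR (- ((ell tau K)%:R))).

Definition feasible {R : realType} (tau : R) (K : nat) (T : finType) (y : T -> R) : Prop :=
  [/\ (forall j, 0 <= y j),
      \sum_(j : T) y j = tau &
      forall S : {set T}, (#|S| <= K)%N ->
        \sum_(j in S) y j <= 1 - expR (- (#|S|%:R))].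

Definition Spad {R : realType} (tau : R) (K n : nat) (i : 'I_n) : R :=
  if (i < (ell tau K).+1)%N then Sstar tau K i else 0.

(* Main.v *)
Require Import Defs.
From mathcomp Require Import all_boot all_order all_algebra.
From mathcomp Require Import all_classical all_reals.
From mathcomp Require Import sequences exp.
From mathcomp Require Import ring lra.
Import Order.TTheory GRing.Theory Num.Theory.
Set Implicit Arguments. Unset Strict Implicit.
Local Open Scope ring_scope.

Lemma ellP (R : realType) (tau : R) (K : nat) : 0 <= tau ->
  [/\ (ell tau K <= K)%N, 1 - expR (- ((ell tau K)%:R)) <= tau &
      ((ell tau K < K)%N -> tau < 1 - expR (- ((ell tau K).+1%:R)))].
Proof.
move=> t0.
have P0 : (1 - expR (- (((@ord0 K) : nat)%:R)) <= tau) by rewrite /= oppr0 expR0 subrr.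
rewrite /ell (bigop.bigmax_eq_arg ord0 P0).
case: arg_maxnP => //= i Pi maxi.
split => //; first by rewrite -ltnS ltn_ord.
move=> iK; rewrite ltNge; apply/negP => H.
have := maxi (Ordinal (iK : (i.+1 < K.+1)%N)) H.
by rewrite /= ltnn.
Qed.

Definition pp (R : realType) (tau : R) (K k : nat) : R :=
  if (k <= ell tau K)%N then Sstar tau K k else 0.
Arguments pp {R}.

Lemma EX (R : realType) (k : nat) : expR (- (k%:R)) = expR (-1) ^+ k :> R.
Proof. by rewrite -expRM_natl mulrN1. Qed.

Lemma xfacts (R : realType) : 0 < expR (-1) :> R /\ 2 * expR (-1) < 1 :> R.
Proof.
split; first exact: expR_gt0.
have h1 : 1 + 1 < expR 1 :> R by apply: expR_gt1Dx; rewrite oner_eq0.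
have h2 : expR 1 * expR (-1) = 1 :> R by rewrite expRxMexpNx_1.
have h3 : 0 < expR (-1) :> R := expR_gt0 _.
nra.
Qed.

Lemma pp_lt (R : realType) (tau : R) K k : (k < ell tau K)%N ->
  pp tau K k = expR (-1) ^+ k - expR (-1) ^+ k.+1.
Proof. by move=> h; rewrite /pp /Sstar (ltnW h) h !EX. Qed.

Lemma pp_L (R : realType) (tau : R) K :
  pp tau K (ell tau K) = tau - (1 - expR (-1) ^+ (ell tau K)).
Proof. by rewrite /pp /Sstar leqnn ltnn EX. Qed.

Lemma pp_gt (R : realType) (tau : R) K k : (ell tau K < k)%N -> pp tau K k = 0.
Proof. by move=> h; rewrite /pp leqNgt h. Qed.

Lemma pp_sum_le (R : realType) (tau : R) K s : (s <= ell tau K)%N ->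
  \sum_(k < s) pp tau K k = 1 - expR (-1) ^+ s.
Proof.
elim: s => [|s IH] h; first by rewrite big_ord0 expr0 subrr.
rewrite big_ord_recr /= IH ?(ltnW h) // pp_lt //; ring.
Qed.

Lemma pp_sum_gt (R : realType) (tau : R) K s : (ell tau K < s)%N ->
  \sum_(k < s) pp tau K k = tau.
Proof.
elim: s => [|s IH] //; rewrite ltnS leq_eqVlt => /orP[/eqP e|h].
  by rewrite big_ord_recr /= -e pp_sum_le // pp_L; ring.
by rewrite big_ord_recr /= IH // pp_gt // addr0.
Qed.

Lemma pp_ge0 (R : realType) (tau : R) K k : 0 <= tau -> 0 <= pp tau K k.
Proof.
move=> t0; case: (ltngtP k (ell tau K)) => h.
- rewrite pp_lt // exprS; have [x0 _] := xfacts R.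
  have : expR (-1) < 1 :> R by rewrite expR_lt1 ltrN10.
  have : 0 <= expR (-1) ^+ k :> R by rewrite exprn_ge0 // ltW.
  nra.
- by rewrite pp_gt.
- have [_ + _] := ellP K t0; rewrite h pp_L EX; lra.
Qed.

Lemma pp_dec (R : realType) (tau : R) K k : 0 <= tau <= 1 ->
  (k < ell tau K)%N -> pp tau K k.+1 < pp tau K k.
Proof.
move=> /andP[t0 t1] h; have [x0 x2] := xfacts R.
have xk0 : 0 < expR (-1) ^+ k :> R by rewrite exprn_gt0.
rewrite (pp_lt h); move: h; rewrite leq_eqVlt => /orP[/eqP e|h].
- have -> : pp tau K k.+1 = tau - (1 - expR (-1) ^+ k.+1) by rewrite e pp_L.
   have [hK _ hlt] := ellP K t0.
  move: hK; rewrite leq_eqVlt => /orP[/eqP eK|lK].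
  + rewrite !exprS. nra.
  + have := hlt lK; rewrite -e EX !exprS; nra.
- rewrite pp_lt // !exprS; nra.
Qed.

Lemma pp_anti (R : realType) (tau : R) K i j : 0 <= tau <= 1 -> (i <= j)%N ->
  pp tau K j <= pp tau K i.
Proof.
move=> ht /subnK <-; elim: (j - i)%N => [|d IH] //.
apply: le_trans IH; rewrite addSn.
case: (ltnP (d + i) (ell tau K)) => h; first by apply/ltW/pp_dec.
rewrite pp_gt //; apply: pp_ge0; by case/andP: ht.
Qed.

Lemma ln_le_sub1 (R : realType) (z : R) : 0 < z -> ln z <= z - 1.
Proof. by move=> z0; have := expR_ge1Dx (ln z); rewrite lnK // => h; lra. Qed.

Lemma g_concav (R : realType) (tau u v w : R) : 0 <= tau -> 0 <= u -> u <= v -> v <= w ->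
  (w - v) * g_tau tau u + (v - u) * g_tau tau w <= (w - u) * g_tau tau v.
Proof.
move=> t0 u0 uv vw; rewrite /g_tau.
set c := expR tau - 1.
have c0 : 0 <= c by rewrite /c subr_ge0 -expR0 ler_expR.
set X := 1 + u * c; set V := 1 + v * c; set Y := 1 + w * c.
have X0 : 0 < X by rewrite /X; nra.
have V0 : 0 < V by rewrite /V; nra.
have Y0 : 0 < Y by rewrite /Y; nra.
have h1 : ln X - ln V <= X / V - 1.
  by rewrite -ln_div ?posrE //; apply: ln_le_sub1; rewrite divr_gt0.
have h2 : ln Y - ln V <= Y / V - 1.
  by rewrite -ln_div ?posrE //; apply: ln_le_sub1; rewrite divr_gt0.
have key : (w - v) * (X / V - 1) + (v - u) * (Y / V - 1) = 0.
  have Vn : V != 0 by exact: lt0r_neq0.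
  have e : (w - v) * X + (v - u) * Y = (w - u) * V by rewrite /X /Y /V; ring.
  clearbody X Y V.
  have -> : (w - v) * (X / V - 1) + (v - u) * (Y / V - 1) =
    ((w - v) * X + (v - u) * Y) / V - (w - u) by field.
  by rewrite e mulrK ?unitfE // subrr.
have wv : 0 <= w - v by lra.
have vu : 0 <= v - u by lra.
nra.
Qed.

Definition sl (R : realType) (tau u w : R) := (g_tau tau w - g_tau tau u) / (w - u).

Lemma slC1 (R : realType) (tau u v w : R) : 0 <= tau -> 0 <= u -> u <= v -> v <= w ->
  sl tau u w * (v - u) <= g_tau tau v - g_tau tau u.
Proof.
move=> t0 u0 uv vw; have := g_concav t0 u0 uv vw; rewrite /sl.
have [e|ne] := eqVneq w u.
  have -> : v = u by apply/eqP; rewrite eq_le uv andbT -e.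
  by rewrite e !subrr mulr0 => _.
have wu : 0 < w - u by rewrite subr_gt0 lt_def ne (le_trans uv vw).
move=> h; rewrite mulrAC ler_pdivrMr //; nra.
Qed.

Lemma slC2 (R : realType) (tau u v w : R) : 0 <= tau -> 0 <= u -> u < v -> v < w ->
  sl tau v w <= sl tau u v.
Proof.
move=> t0 u0 uv vw; have := g_concav t0 u0 (ltW uv) (ltW vw); rewrite /sl.
have a : 0 < w - v by rewrite subr_gt0.
have b : 0 < v - u by rewrite subr_gt0.
move=> h; rewrite ler_pdivrMr // mulrAC ler_pdivlMr //; nra.
Qed.

Lemma g0 (R : realType) (tau : R) : g_tau tau 0 = 0.
Proof. by rewrite /g_tau mul0r addr0 ln1. Qed.

Lemma sum_sub_le (R : realType) (T : finType) (y : T -> R) (S : {set T}) :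
  (forall j, 0 <= y j) -> \sum_(j in S) y j <= \sum_j y j.
Proof.
move=> y0; rewrite [X in _ <= X](bigID (mem S)) /= lerDl.
by apply: sumr_ge0 => j _; exact: y0.
Qed.

Lemma subset_bound (R : realType) (tau : R) K (T : finType) (y : T -> R) :
  0 <= tau -> feasible tau K y -> forall S : {set T},
  \sum_(j in S) y j <= \sum_(k < #|S|) pp tau K k.
Proof.
move=> t0 [y0 ysum yS] S.
have [hK _ _] := ellP K t0.
case: (leqP #|S| (ell tau K)) => h.
- rewrite pp_sum_le // -EX; apply: yS; exact: leq_trans h hK.
- rewrite pp_sum_gt // -ysum; exact: sum_sub_le.
Qed.

Lemma split_min (R : realType) (a : nat -> R) (t : R) (s N : nat) : 0 <= t -> (s <= N)%N ->
  \sum_(i < N) Num.min (a i) t <= s%:R * t + (\sum_(i < N) a i - \sum_(i < s) a i).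
Proof.
move=> t0 sN.
rewrite -(big_mkord xpredT (fun i => Num.min (a i) t)) -!(big_mkord xpredT a).
rewrite !(big_cat_nat (leq0n s) sN) /=.
have h1 : \sum_(0 <= i < s) Num.min (a i) t <= \sum_(0 <= i < s) t.
  by apply: ler_sum => i _; rewrite ge_min lexx orbT.
have h2 : \sum_(s <= i < N) Num.min (a i) t <= \sum_(s <= i < N) a i.
  by apply: ler_sum => i _; rewrite ge_min lexx.
rewrite sumr_const_nat subn0 -mulr_natl in h1; lra.
Qed.

Lemma thresh (R : realType) (tau : R) K (T : finType) (y : T -> R) (t : R) :
  0 <= tau -> feasible tau K y -> 0 <= t ->
  \sum_(i < (ell tau K).+1) Num.min (pp tau K i) t <= \sum_j Num.min (y j) t.
Proof.
move=> t0 fy tt0; have [y0 ysum yS] := fy.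
set S := [set j | t < y j].
have eM : \sum_j Num.min (y j) t = #|S|%:R * t + (tau - \sum_(j in S) y j).
  rewrite -ysum (bigID (mem S)) /= [X in _ = _ + (X - _)](bigID (mem S)) /=.
  have -> : \sum_(j in S) Num.min (y j) t = \sum_(j in S) t.
    by apply: eq_bigr => j; rewrite inE => h; rewrite min_r // ltW.
  have -> : \sum_(j | j \notin S) Num.min (y j) t = \sum_(j | j \notin S) y j.
    by apply: eq_bigr => j; rewrite inE -leNgt => h; rewrite min_l.
  rewrite sumr_const -mulr_natl; ring.
have sb := subset_bound t0 fy S.
rewrite eM; case: (leqP (ell tau K).+1 #|S|) => hs.
- have := split_min (pp tau K) tt0 (leqnn (ell tau K).+1).
  rewrite subrr addr0 => h1.
  have h2 : (ell tau K).+1%:R * t <= #|S|%:R * t by rewrite ler_wpM2r // ler_nat.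
  move: sb; rewrite pp_sum_gt // => h3; lra.
- have := split_min (pp tau K) tt0 (ltnW hs).
  rewrite pp_sum_gt // => h1; lra.
Qed.

Definition sig (R : realType) (tau : R) K k := sl tau (pp tau K k.+1) (pp tau K k).
Definition Hf (R : realType) (tau : R) K (y : R) :=
  \sum_(k < (ell tau K).+1) sig tau K k * (Num.min y (pp tau K k) - Num.min y (pp tau K k.+1)).

Lemma tele (R : realType) (G : nat -> R) n : \sum_(k < n) (G k - G k.+1) = G 0%N - G n.
Proof.
elim: n => [|n IH]; first by rewrite big_ord0 subrr.
by rewrite big_ord_recr /= IH; ring.
Qed.

Lemma abel (R : realType) (s D : nat -> R) n :
  \sum_(k < n.+1) s k * (D k - D k.+1) =
  s 0%N * D 0%N + \sum_(k < n) (s k.+1 - s k) * D k.+1 - s n * D n.+1.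
Proof.
elim: n => [|n IH]; first by rewrite big_ord_recr !big_ord0 /=; ring.
by rewrite big_ord_recr /= IH big_ord_recr /=; ring.
Qed.

Lemma T1 (R : realType) (tau : R) K k y : 0 <= tau <= 1 -> 0 <= y ->
  sig tau K k * (Num.min y (pp tau K k) - Num.min y (pp tau K k.+1)) <=
  g_tau tau (Num.min y (pp tau K k)) - g_tau tau (Num.min y (pp tau K k.+1)).
Proof.
move=> ht y0; have t0 : 0 <= tau by case/andP: ht.
have a : pp tau K k.+1 <= pp tau K k by apply: pp_anti.
have p0 := pp_ge0 K k.+1 t0.
case: (leP y (pp tau K k.+1)) => h.
  by rewrite (min_l (le_trans h a)) !subrr mulr0.
apply: slC1 => //.
  by rewrite le_min a ltW.
by rewrite ge_min lexx orbT.
Qed.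

Lemma T2 (R : realType) (tau : R) K k i : 0 <= tau <= 1 ->
  sig tau K k * (Num.min (pp tau K i) (pp tau K k) - Num.min (pp tau K i) (pp tau K k.+1)) =
  g_tau tau (Num.min (pp tau K i) (pp tau K k)) - g_tau tau (Num.min (pp tau K i) (pp tau K k.+1)).
Proof.
move=> ht; case: (ltnP k i) => h.
  have h1 : pp tau K i <= pp tau K k.+1 by apply: pp_anti.
  have h2 : pp tau K i <= pp tau K k by apply: pp_anti => //; exact: ltnW.
  by rewrite (min_l h1) (min_l h2) !subrr mulr0.
have h1 : pp tau K k.+1 <= pp tau K i by apply: pp_anti => //; exact: (leq_trans h).
have h2 : pp tau K k <= pp tau K i by apply: pp_anti.
rewrite (min_r h1) (min_r h2) /sig /sl.
have [e|ne] := eqVneq (pp tau K k) (pp tau K k.+1).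
  by rewrite e !subrr mulr0.
by rewrite divfK // subr_eq0.
Qed.

Lemma H1 (R : realType) (tau : R) K y : 0 <= tau <= 1 -> 0 <= y -> y <= pp tau K 0 ->
  Hf tau K y <= g_tau tau y.
Proof.
move=> ht y0 yp; have t0 : 0 <= tau by case/andP: ht.
have hs : Hf tau K y <= \sum_(k < (ell tau K).+1)
    (g_tau tau (Num.min y (pp tau K k)) - g_tau tau (Num.min y (pp tau K k.+1))).
  by apply: ler_sum => k _; apply: T1.
apply: (le_trans hs).
rewrite (tele (fun k => g_tau tau (Num.min y (pp tau K k)))) /= (min_l yp).
by rewrite pp_gt // (min_r y0) g0 subr0.
Qed.

Lemma H2 (R : realType) (tau : R) K i : 0 <= tau <= 1 ->
  Hf tau K (pp tau K i) = g_tau tau (pp tau K i).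
Proof.
move=> ht; have t0 : 0 <= tau by case/andP: ht.
have -> : Hf tau K (pp tau K i) = \sum_(k < (ell tau K).+1)
    (g_tau tau (Num.min (pp tau K i) (pp tau K k)) - g_tau tau (Num.min (pp tau K i) (pp tau K k.+1))).
  by apply: eq_bigr => k _; apply: T2.
rewrite (tele (fun k => g_tau tau (Num.min (pp tau K i) (pp tau K k)))) /=.
rewrite (min_l (pp_anti K ht (leq0n i))) (pp_gt (ltnSn (ell tau K))) (min_r (pp_ge0 K i t0)).
by rewrite g0 subr0.
Qed.

Lemma part1 (R : realType) (tau : R) K (T : finType) (y : T -> R) :
  0 <= tau <= 1 -> feasible tau K y ->
  \sum_(k < (ell tau K).+1) g_tau tau (Sstar tau K k) <= \sum_j g_tau tau (y j).
Proof.
move=> ht fy; have t0 : 0 <= tau by case/andP: ht.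
have [y0 ysum yS] := fy.
have yp0 : forall j, y j <= pp tau K 0.
  move=> j; have := subset_bound t0 fy [set j].
  by rewrite big_set1 cards1 big_ord1.
have -> : \sum_(k < (ell tau K).+1) g_tau tau (Sstar tau K k) =
          \sum_(k < (ell tau K).+1) Hf tau K (pp tau K k).
  apply: eq_bigr => k _; rewrite H2 // /pp.
  by have -> : (k <= ell tau K)%N by rewrite -ltnS ltn_ord.
apply: (@le_trans _ _ (\sum_j Hf tau K (y j))); last first.
  by apply: ler_sum => j _; apply: H1.
pose Mf t := \sum_j Num.min (y j) t.
pose Nf t := \sum_(i < (ell tau K).+1) Num.min (pp tau K i) t.
have eY : \sum_j Hf tau K (y j) =
    \sum_(k < (ell tau K).+1) sig tau K k * (Mf (pp tau K k) - Mf (pp tau K k.+1)).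
  rewrite /Hf exchange_big /=; apply: eq_bigr => k _.
  by rewrite /Mf -sumrB mulr_sumr.
have eN : \sum_(i < (ell tau K).+1) Hf tau K (pp tau K i) =
    \sum_(k < (ell tau K).+1) sig tau K k * (Nf (pp tau K k) - Nf (pp tau K k.+1)).
  rewrite /Hf exchange_big /=; apply: eq_bigr => k _.
  by rewrite /Nf -sumrB mulr_sumr.
pose D k := Mf (pp tau K k) - Nf (pp tau K k).
have M0 : Mf 0 = 0 by rewrite /Mf big1 // => j _; rewrite min_r.
have N0 : Nf 0 = 0 by rewrite /Nf big1 // => j _; rewrite min_r // pp_ge0.
have D0 : D 0%N = 0.
  rewrite /D /Mf /Nf.
  have -> : \sum_j Num.min (y j) (pp tau K 0) = tau.
    by rewrite -[in RHS]ysum; apply: eq_bigr => j _; rewrite min_l ?yp0.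
  have -> : \sum_(i < (ell tau K).+1) Num.min (pp tau K i) (pp tau K 0) = tau.
    rewrite -[in RHS](pp_sum_gt (ltnSn (ell tau K))); apply: eq_bigr => i _.
    by rewrite min_l // pp_anti.
  by rewrite subrr.
have DL : D (ell tau K).+1 = 0 by rewrite /D (pp_gt (ltnSn _)) M0 N0 subrr.
have Dnn : forall k, 0 <= D k.
  by move=> k; rewrite /D subr_ge0; apply: thresh => //; apply: pp_ge0.
have Dsig : forall k, (k < ell tau K)%N -> 0 <= (sig tau K k.+1 - sig tau K k) * D k.+1.
  move=> k kL.
  have [e|ne] := eqVneq (pp tau K k.+1) 0.
    by rewrite /D e M0 N0 subrr mulr0.
  apply: mulr_ge0 => //; rewrite subr_ge0 /sig.
  have a1 : pp tau K k.+2 < pp tau K k.+1.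
    case: (ltnP k.+1 (ell tau K)) => h; first exact: pp_dec.
    rewrite pp_gt; last by rewrite ltnS.
    by rewrite lt_def ne pp_ge0.
  apply: slC2 => //; [exact: pp_ge0 | exact: pp_dec].
rewrite eY eN -subr_ge0 -sumrB.
have -> : \sum_(k < (ell tau K).+1) (sig tau K k * (Mf (pp tau K k) - Mf (pp tau K k.+1)) -
     sig tau K k * (Nf (pp tau K k) - Nf (pp tau K k.+1))) =
   \sum_(k < (ell tau K).+1) sig tau K k * (D k - D k.+1).
  by apply: eq_bigr => k _; rewrite /D; ring.
rewrite (abel (sig tau K) D (ell tau K)) D0 DL !mulr0 add0r subr0.
by apply: sumr_ge0 => k _; apply: Dsig.
Qed.

Lemma topsum (R : realType) (tau : R) K n (S : {set 'I_n}) : 0 <= tau <= 1 ->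
  \sum_(i in S) pp tau K i <= \sum_(k < #|S|) pp tau K k.
Proof.
move=> ht; set s := #|S|; set t := pp tau K s.
have sn : (s <= n)%N by rewrite -[X in (_ <= X)%N]card_ord; exact: max_card.
have e1 : \sum_(i in S) pp tau K i = \sum_(i in S) (pp tau K i - t) + s%:R * t.
  by rewrite sumrB sumr_const mulr_natl subrK.
have e2 : \sum_(i in S) (pp tau K i - t) <= \sum_(i : 'I_n) Num.max (pp tau K i - t) 0.
  apply: le_trans (sum_sub_le S _); last by move=> i; rewrite le_max lexx orbT.
  by apply: ler_sum => i _; rewrite le_max lexx.
have e3 : \sum_(i : 'I_n) Num.max (pp tau K i - t) 0 = \sum_(k < s) pp tau K k - s%:R * t.
  rewrite -(big_mkord xpredT (fun i => Num.max (pp tau K i - t) 0)).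
  rewrite (big_cat_nat (leq0n s) sn) /=.
  have -> : \sum_(s <= i < n) Num.max (pp tau K i - t) 0 = 0.
    rewrite big_nat_cond big1 // => i /andP[/andP[hi _] _].
    by apply/max_idPr; rewrite subr_le0 pp_anti.
  rewrite addr0 big_nat_cond.
  have -> : \sum_(0 <= i < s | (0 <= i < s)%N && true) Num.max (pp tau K i - t) 0 =
            \sum_(0 <= i < s | (0 <= i < s)%N && true) (pp tau K i - t).
    apply: eq_bigr => i /andP[/andP[_ hi] _]; apply/max_idPl.
    by rewrite subr_ge0 pp_anti // ltnW.
  by rewrite -big_nat_cond sumrB sumr_const_nat subn0 big_mkord mulr_natl.
lra.
Qed.

Lemma part2 (R : realType) (tau : R) K n : 0 <= tau <= 1 -> ((ell tau K).+1 <= n)%N ->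
  feasible tau K (Spad tau K (n:=n)) /\
  \sum_(i < n) g_tau tau (Spad tau K i) =
  \sum_(k < (ell tau K).+1) g_tau tau (Sstar tau K k).
Proof.
move=> ht hn; have t0 : 0 <= tau by case/andP: ht.
have SP : forall i : 'I_n, Spad tau K i = pp tau K i by move=> i; rewrite /Spad /pp ltnS.
split; last first.
  under eq_bigr do rewrite SP.
  rewrite -(big_mkord xpredT (fun i => g_tau tau (pp tau K i))) (big_cat_nat (leq0n _) hn) /=.
  rewrite [X in _ + X = _]big_nat_cond [X in _ + X = _]big1 ?addr0; last first.
    by move=> i /andP[/andP[hi _] _]; rewrite pp_gt ?g0.
  rewrite big_mkord; apply: eq_bigr => k _; rewrite /pp.
  by have -> : (k <= ell tau K)%N by rewrite -ltnS ltn_ord.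
split.
- by move=> i; rewrite SP pp_ge0.
- under eq_bigr do rewrite SP.
  by rewrite -(big_mkord xpredT (pp tau K)) big_mkord pp_sum_gt.
- move=> S hS.
  under eq_bigr do rewrite SP.
  apply: le_trans (topsum K S ht) _.
  have [hK hl hlt] := ellP K t0.
  case: (leqP #|S| (ell tau K)) => h; first by rewrite pp_sum_le // EX.
  rewrite pp_sum_gt //.
  have lK : (ell tau K < K)%N by apply: leq_trans h hS.
  apply: le_trans (ltW (hlt lK)) _.
  by rewrite lerD2l lerN2 ler_expR lerN2 ler_nat.
Qed.

Unset Implicit Arguments.

Theorem mainTheorem9 (R : realType) (tau : R) (K : nat) :
  0 <= tau <= 1 -> (1 <= K)%N ->
  (forall (T : finType) (y : T -> R), feasible tau K y ->
     \sum_(k < (ell tau K).+1) g_tau tau (Sstar tau K k)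
       <= \sum_(j : T) g_tau tau (y j))
  /\
  (forall n : nat, ((ell tau K).+1 <= n)%N ->
     feasible tau K (Spad tau K (n:=n)) /\
     \sum_(i < n) g_tau tau (Spad tau K i)
       = \sum_(k < (ell tau K).+1) g_tau tau (Sstar tau K k)).
Proof.
move=> ht _; split.
- by move=> T y fy; apply: part1.
- by move=> n hn; apply: part2.
Qed.
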